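(* Let $k\ge 2$ be an integer and let $\mathcal H_{k\text{-word}}$ be the class of $k$-word-representable graphs. Then for every $p\in[0,1]$, $$\mathrm{ed}_{\mathcal H_{k\text{-word}}}(p)=\min\{p,\;1-p\}.$$ Consequently $\max\{\mathrm{dist}(G,\mathcal H_{k\text{-word}}) : |V(G)|=n\}=\tfrac12-o(1)$ as $n\to\infty$. Moreover, for every $\epsilon>0$ and every graph $G$ on $n\ge2$ vertices, if $\mathrm{dist}(G,\mathcal H_{k\text{-word}})\ge\tfrac12-\epsilon$, then $|E(G)|/\binom n2\in[\tfrac12-\epsilon,\tfrac12+\epsilon]$.
   Context: A word over an alphabet $V$ represents a graph $G=(V,E)$ if for all distinct $x,y\in V$: $xy\in E$ if and only if the occurrences of $x$ and $y$ alternate in the word. $G$ is $k$-word-representable if it is represented by a word in which every letter of $V$ occurs exactly $k$ times; $\mathcal H_{k\text{-word}}$ is the (hereditary) class of such graphs. For graphs $G,H$ on the same $n$-vertex set, $\mathrm{dist}(G,H)=|E(G)\triangle E(H)|/\binom n2$. For a hereditary property $\mathcal H$, $\mathrm{dist}(G,\mathcal H)=\min\{\mathrm{dist}(G,H): H\in\mathcal H,\ V(H)=V(G)\}$, and $\mathrm{ed}_{\mathcal H}(p)=\lim_{n\to\infty}\max\{\mathrm{dist}(G,\mathcal H): |V(G)|=n,\ |E(G)|=\lfloor p\binom n2\rfloor\}$ (the limit exists). *)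

(* Defs.v *)
From HB Require Import structures.
From mathcomp Require Import all_boot all_order all_algebra.
From mathcomp Require Import all_classical all_reals all_analysis.
Set Implicit Arguments. Unset Strict Implicit. Unset Printing Implicit Defensive.
Import Order.TTheory GRing.Theory Num.Theory.
Local Open Scope ring_scope.

Definition simple_graph (n : nat) (E : {set {set 'I_n}}) : bool :=
  [forall e in E, #|e| == 2%N].

Definition alternate (n : nat) (w : seq 'I_n) (x y : 'I_n) : bool :=
  sorted (fun a b => a != b) (seq.filter (fun z => (z == x) || (z == y)) w).

Definition word_represents (n : nat) (w : seq 'I_n) (E : {set {set 'I_n}}) : Prop :=
  forall x y : 'I_n, x != y -> ([set x; y] \in E) = alternate w x y.

Definition kword_representable (k n : nat) (E : {set {set 'I_n}}) : Prop :=
  simple_graph E /\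
  exists w : seq 'I_n, (forall x : 'I_n, count_mem x w = k) /\ word_represents w E.

Definition symdiff_card (n : nat) (E F : {set {set 'I_n}}) : nat :=
  #|(E :\: F) :|: (F :\: E)|.

Definition dist (R : realType) (n : nat) (E F : {set {set 'I_n}}) : R :=
  (symdiff_card E F)%:R / ('C(n, 2))%:R.

(* dist(G, H_{k-word}) : minimum over all k-word-representable graphs on the
   same vertex set (this set is nonempty; the default 1 is never reached for
   n >= 2 and irrelevant otherwise). *)
Definition dist_kword (R : realType) (k n : nat) (E : {set {set 'I_n}}) : R :=
  \big[Num.min/1]_(F : {set {set 'I_n}} | `[< kword_representable k F >])
     dist R E F.

Definition max_dist_density (R : realType) (k : nat) (p : R) (n : nat) : R :=
  \big[Num.max/0]_(E : {set {set 'I_n}} |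
        simple_graph E && (#|E|%:Z == Num.floor (p * ('C(n, 2))%:R)))
     dist_kword R k E.

Definition max_dist (R : realType) (k n : nat) : R :=
  \big[Num.max/0]_(E : {set {set 'I_n}} | simple_graph E) dist_kword R k E.

Definition edge_density (R : realType) (n : nat) (E : {set {set 'I_n}}) : R :=
  (#|E|)%:R / ('C(n, 2))%:R.

(* Main.v *)
Require Import Defs.
From HB Require Import structures.
From mathcomp Require Import all_boot all_order all_algebra.
From mathcomp Require Import all_classical all_reals all_analysis.
From mathcomp Require Import zify lra.
Import Order.TTheory GRing.Theory Num.Theory.
Import numFieldNormedType.Exports.
Set Implicit Arguments. Unset Strict Implicit. Unset Printing Implicit Defensive.

Module Comb.
Import ssrbool eqtype ssrnat seq fintype finset bigop binomial tuple.
Local Open Scope nat_scope.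
Local Notation inE := finset.inE.
Local Notation setD0 := finset.setD0.
Local Notation set0D := finset.set0D.
Local Notation setU0 := finset.setU0.
Local Notation set0U := finset.set0U.
Local Notation subsetP := fintype.subsetP.
Local Notation setIidPr := finset.setIidPr.
Local Notation setD_eq0 := finset.setD_eq0.
Local Notation setP := finset.setP.

Definition Pairs n : {set {set 'I_n}} := [set e : {set 'I_n} | #|e| == 2].
Arguments Pairs : clear implicits.

Lemma card_Pairs n : #|Pairs n| = 'C(n, 2).
Proof. by rewrite /Pairs card_draws card_ord. Qed.

Lemma simple_sub n (E : {set {set 'I_n}}) : simple_graph E -> E \subset Pairs n.
Proof. by move=> /forallP H; apply/subsetP => e eE; move: (H e); rewrite eE /Pairs inE. Qed.

Lemma sub_simple n (E : {set {set 'I_n}}) : E \subset Pairs n -> simple_graph E.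
Proof. by move=> /subsetP H; apply/forallP => e; apply/implyP => /H; rewrite inE. Qed.

Lemma filter_enum2 n (x y : 'I_n) : x != y ->
  exists a b, a != b /\ filter (fun z => (z == x) || (z == y)) (enum 'I_n) = [:: a; b].
Proof.
move=> xy.
set r := filter _ _.
have ur : uniq r by apply: filter_uniq; apply: enum_uniq.
have pr : perm_eq r [:: x; y].
  apply: uniq_perm => //; first by rewrite /= inE xy.
  by move=> z; rewrite mem_filter mem_enum andbT !inE.
have := perm_size pr; move: ur; clear pr.
case: r => [|a [|b [|c t]]] //= ; rewrite inE andbT => ab _.
by exists a, b.
Qed.

Lemma count_flat_nseq n (x : 'I_n) k s :
  count_mem x (flatten (nseq k s)) = k * count_mem x s.
Proof. by elim: k => [|k IH] /=; rewrite ?muln0 // count_cat IH mulSn. Qed.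

Lemma count_flat_map n (x : 'I_n) k s :
  count_mem x (flatten [seq nseq k z | z <- s]) = k * count_mem x s.
Proof.
elim: s => [|a s IH] /=; rewrite ?muln0 // count_cat IH count_nseq /=.
by rewrite mulnDr mulnC.
Qed.

Lemma count_enum1 n (x : 'I_n) : count_mem x (enum 'I_n) = 1.
Proof. by rewrite count_uniq_mem ?enum_uniq // mem_enum. Qed.

Lemma filter_flat_nseq (T : eqType) (P : pred T) k s :
  filter P (flatten (nseq k s)) = flatten (nseq k (filter P s)).
Proof. by elim: k => //= k IH; rewrite filter_cat IH. Qed.

Lemma filter_flat_map (T : eqType) (P : pred T) k s :
  filter P (flatten [seq nseq k z | z <- s]) = flatten [seq nseq k z | z <- filter P s].
Proof.
elim: s => //= a s IH; rewrite filter_cat IH filter_nseq.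
by case: (P a); rewrite /= ?mul1n ?mul0n.
Qed.

Lemma sorted_ab (T : eqType) (a b : T) k : a != b ->
  sorted (fun u v => u != v) (flatten (nseq k [:: a; b])).
Proof.
move=> ab.
have H : forall k, path (fun u v => u != v) b (flatten (nseq k [:: a; b])).
  by elim=> //= j ->; rewrite eq_sym ab.
case: k => //= k; rewrite ab /=; exact: H.
Qed.

Definition wK k n : seq 'I_n := flatten (nseq k (enum 'I_n)).
Definition wE k n : seq 'I_n := flatten [seq nseq k z | z <- enum 'I_n].
Arguments wK : clear implicits.
Arguments wE : clear implicits.

Lemma complete_rep k n : kword_representable k (Pairs n).
Proof.
split; first by apply: sub_simple.
exists (wK k n); split.
  by move=> x; rewrite count_flat_nseq count_enum1 muln1.
move=> x y xy; rewrite /Pairs inE cards2 xy /alternate /wK filter_flat_nseq.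
have [a [b [ab ->]]] := filter_enum2 xy.
by rewrite sorted_ab.
Qed.

Lemma empty_rep k n : 2 <= k -> kword_representable k (finset.set0 : {set {set 'I_n}}).
Proof.
move=> hk; split; first by apply/forallP => e; rewrite inE.
exists (wE k n); split.
  by move=> x; rewrite count_flat_map count_enum1 muln1.
move=> x y xy; rewrite inE /alternate /wE filter_flat_map.
have [a [b [ab ->]]] := filter_enum2 xy.
case: k hk => [|[|k]] //= _.
by rewrite eqxx.
Qed.

Lemma symdiff0 n (E : {set {set 'I_n}}) : symdiff_card E finset.set0 = #|E|.
Proof. by rewrite /symdiff_card setD0 set0D setU0. Qed.

Lemma symdiffK n (E : {set {set 'I_n}}) : E \subset Pairs n ->
  symdiff_card E (Pairs n) = 'C(n, 2) - #|E|.
Proof.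
move=> sE; rewrite /symdiff_card.
have -> : E :\: Pairs n = finset.set0 by apply/eqP; rewrite setD_eq0.
by rewrite set0U cardsD (setIidPr sE) card_Pairs.
Qed.

Definition graph_of n (w : seq 'I_n) : {set {set 'I_n}} :=
  [set e : {set 'I_n} | [exists x : 'I_n, exists y : 'I_n,
     [&& x != y, e == [set x; y] & alternate w x y]]].

Lemma rep_graph_of n (F : {set {set 'I_n}}) w :
  simple_graph F -> word_represents w F -> F = graph_of w.
Proof.
move=> /simple_sub /subsetP sF rF; apply/setP => e; rewrite inE.
apply/idP/idP.
  move=> eF; have := sF _ eF; rewrite inE => /cards2P [x [y [xy eq]]].
  apply/existsP; exists x; apply/existsP; exists y; rewrite xy eq eqxx -rF //=.
  by rewrite -eq.
by move=> /existsP [x /existsP [y /and3P [xy /eqP -> al]]]; rewrite rF.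
Qed.

Lemma size_count n (w : seq 'I_n) : size w = \sum_(x : 'I_n) count_mem x w.
Proof.
elim: w => [|a w IH] /=; first by rewrite big1.
rewrite IH big_split /= -add1n; congr (_ + _).
rewrite (bigD1 a) //= eqxx big1 // => i /negPf; rewrite eq_sym => -> //.
Qed.

Definition sd n (A B : {set {set 'I_n}}) := (A :\: B) :|: (B :\: A).

Lemma sdK n (E F : {set {set 'I_n}}) : sd F (sd E F) = E.
Proof.
apply/setP => e; rewrite !inE.
by case: (e \in E); case: (e \in F).
Qed.

Definition Small n D := [set S : {set {set 'I_n}} | (S \subset Pairs n) && (#|S| <= D)].
Arguments Small : clear implicits.

Lemma card_Small n D : #|Small n D| <= \sum_(i < D.+1) 'C('C(n, 2), i).
Proof.
elim: D => [|D IH].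
  rewrite big_ord_recr big_ord0 /= add0n -card_Pairs -cards_draws.
  by apply: subset_leq_card; apply/subsetP => S; rewrite !inE leqn0.
rewrite big_ord_recr /=.
apply: leq_trans (leq_add IH (leqnn _)).
rewrite -card_Pairs -cards_draws.
apply: leq_trans (leq_card_setU _ _).
apply: subset_leq_card; apply/subsetP => S; rewrite !inE leq_eqVlt ltnS.
by case: (S \subset _) => //=; rewrite orbC.
Qed.

Lemma count_exists n k (m D : nat) :
  n ^ (k * n) * (\sum_(i < D.+1) 'C('C(n, 2), i)) < 'C('C(n, 2), m) ->
  exists E : {set {set 'I_n}}, [/\ simple_graph E, #|E| = m &
    forall F, kword_representable k F -> D < symdiff_card E F].
Proof.
move=> H.
pose T := (k * n).-tuple 'I_n.
pose g (ts : T * {set {set 'I_n}}) := sd (graph_of ts.1) ts.2.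
pose Img := g @: finset.setX (finset.setTfor T) (Small n D).
pose Cand := [set E : {set {set 'I_n}} | (E \subset Pairs n) && (#|E| == m)].
have cC : #|Cand| = 'C('C(n, 2), m) by rewrite -card_Pairs -cards_draws.
have cI : #|Img| <= n ^ (k * n) * (\sum_(i < D.+1) 'C('C(n, 2), i)).
  apply: leq_trans (leq_imset_card _ _) _.
  by rewrite cardsX cardsT card_tuple card_ord leq_mul2l card_Small orbT.
have : ~~ (Cand \subset Img).
  apply/negP => /subset_leq_card; rewrite cC => H2.
  by move: (leq_ltn_trans H2 (leq_ltn_trans cI H)); rewrite ltnn.
case/subsetPn => E; rewrite inE => /andP [sE /eqP cE] nI.
exists E; split => //; first exact: sub_simple.
move=> F [simF [w [cw rw]]].
rewrite ltnNge; apply/negP => hD; move/negP: nI; apply.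
have sw : size w == k * n.
  by rewrite size_count (eq_bigr (fun _ => k)) // sum_nat_const card_ord mulnC.
apply/imsetP; exists (Tuple sw, sd E F).
  rewrite inE /= inE /= inE; apply/andP; split => //.
  apply/subsetP => e; rewrite !inE => /orP [] /andP [_ he].
    by have := subsetP sE e he; rewrite inE.
  by have := subsetP (simple_sub simF) e he; rewrite inE.
by rewrite /g /= -(rep_graph_of simF rw) sdK.
Qed.

Lemma exists_card n m : m <= 'C(n, 2) ->
  exists E : {set {set 'I_n}}, simple_graph E /\ #|E| = m.
Proof.
move=> hm.
have : 0 < #|[set A : {set {set 'I_n}} | (A \subset Pairs n) && (#|A| == m)]|.
  by rewrite cards_draws card_Pairs bin_gt0.
case/card_gt0P => E; rewrite inE => /andP [sE /eqP cE].
by exists E; split => //; apply: sub_simple.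
Qed.

End Comb.
Import Comb.

Module NatB.
Import ssrbool eqtype ssrnat seq fintype finset bigop binomial tuple div prime.
Local Open Scope nat_scope.

Lemma expn_mono a b e : a <= b -> a ^ e <= b ^ e.
Proof. by move=> ab; elim: e => // e IH; rewrite !expnS leq_mul. Qed.

Lemma bin_step N j : 2 * j.+1 <= N -> 'C(N, j) <= 'C(N, j.+1).
Proof.
move=> h; have e := mul_bin_left N j.
rewrite -(leq_pmul2l (ltn0Sn j)) e leq_mul2r; apply/orP; right; lia.
Qed.

Lemma bin_mono N j d : 2 * (j + d) <= N -> 'C(N, j) <= 'C(N, j + d).
Proof.
elim: d => [|d IH] h; first by rewrite addn0.
apply: leq_trans (IH _) _; first lia.
rewrite addnS; apply: bin_step; lia.
Qed.

Lemma bin_ratio1 N M j : j < M ->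
  'C(N, j) * (N - M) <= 'C(N, j.+1) * M.
Proof.
move=> jM.
have e := mul_bin_left N j.
rewrite -(leq_pmul2l (ltn0Sn j)) [X in _ <= X]mulnA e.
have h : j.+1 * (N - M) <= M * (N - j) by nia.
rewrite mulnCA -mulnA [X in _ <= X]mulnC -[X in _ <= X]mulnA leq_mul2l.
by rewrite h orbT.
Qed.

Lemma bin_ratio N M d : forall j, j + d = M ->
  'C(N, j) * (N - M) ^ d <= 'C(N, M) * M ^ d.
Proof.
elim: d => [|d IH] j hj; first by rewrite addn0 in hj; rewrite hj !expn0.
have h1 := IH j.+1 (etrans (addSnnS j d) hj).
have h2 := bin_ratio1 N (j := j) (M := M) ltac:(lia).
rewrite expnS mulnA.
apply: leq_trans (leq_mul h2 (leqnn _)) _.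
rewrite -mulnA [M * _]mulnC mulnA expnS mulnA [_ * M]mulnC -mulnA [M * _]mulnC.
by rewrite [M * M ^ d]mulnC mulnA leq_mul2r h1 orbT.
Qed.

Lemma bern M x q : M * (M + x) ^ q >= M ^ q * (M + q * x).
Proof.
elim: q => [|q IH]; first by rewrite mul0n addn0 expn0 mul1n muln1.
apply: (@leq_trans ((M + x) * (M ^ q * (M + q * x)))).
  rewrite expnS; set P := M ^ q; nia.
by rewrite [(M + x) ^ _]expnS [X in _ <= X]mulnCA leq_mul2l IH orbT.
Qed.

Lemma bern2 M x q : 0 < q -> M <= q * x -> 2 * M ^ q <= (M + x) ^ q.
Proof.
move=> q0 hM.
case: (posnP M) => [->|M0].
  by rewrite exp0n // muln0.
have h := bern M x q.
rewrite -(leq_pmul2l M0); apply: leq_trans h.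
set P := M ^ q; nia.
Qed.

Lemma bern3 M x q t : 0 < q -> M <= q * x -> 2 ^ t * M ^ (q * t) <= (M + x) ^ (q * t).
Proof.
move=> q0 hM; elim: t => [|t IH]; first by rewrite muln0 !expn0.
rewrite mulnS !expnD expnS.
have h2 := bern2 q0 hM.
apply: leq_trans (leq_mul h2 IH).
by rewrite -!mulnA leq_mul2l [X in _ <= X]mulnCA leqnn orbT.
Qed.

Lemma bern4 M x q t L : 0 < q -> M <= q * x -> q * t <= L ->
  2 ^ t * M ^ L <= (M + x) ^ L.
Proof.
move=> q0 hM hL.
rewrite -(subnKC hL) !expnD mulnA.
apply: leq_mul; first exact: bern3.
by apply: expn_mono; rewrite leq_addr.
Qed.

Lemma sum_bin_le N D : 2 * D <= N ->
  \sum_(i < D.+1) 'C(N, i) <= D.+1 * 'C(N, D).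
Proof.
move=> h.
rewrite -[X in X * _]card_ord -sum_nat_const.
apply: leq_sum => i _.
have hi := ltn_ord i; rewrite ltnS in hi.
have := @bin_mono N i (D - i) ltac:(lia).
by rewrite (subnKC hi).
Qed.

Lemma core n k m q N s m' D :
  N = 'C(n, 2) -> s = N %/ q -> m' = minn m (N - m) -> D = m' - 2 * s ->
  m <= N -> 0 < q -> 2 * q <= N -> 2 * s <= m' ->
  n ^ (k * n) * D.+1 < 2 ^ (s %/ q) ->
  n ^ (k * n) * (\sum_(i < D.+1) 'C(N, i)) < 'C(N, m).
Proof.
move=> eN es em' eD mN q0 qN sm H.
have hs1 : q * s <= N by rewrite mulnC es leq_trunc_div.
have hs2 : N < q * s.+1 by rewrite mulnC es ltn_ceil.
have s0 : 0 < s by nia.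
have hm' : 2 * m' <= N by lia.
have ht : q * (s %/ q) <= s by rewrite mulnC leq_trunc_div.
move: ht H; set t := s %/ q => ht H.
clear es eN.
set M := m' - s.
have eM : M = m' - s by [].
clearbody M.
have hDM : D + s = M by lia.
have hNM : M + 2 * s <= N - M by lia.
have hqs : M <= q * (2 * s) by lia.
have hB := bern4 q0 hqs ht.
have M0 : 0 < M by lia.
have hC : 'C(N, m) = 'C(N, m').
  case: (leqP m (N - m)) => h.
    by have -> : m' = m by clear -em' h; lia.
  have -> : m' = N - m by clear -em' h mN; lia.
  by rewrite bin_sub.
have hCp : 0 < 'C(N, m') by rewrite bin_gt0; clear -em' mN; lia.
have r1 := sum_bin_le (N := N) (D := D) ltac:(clear -eD hm'; lia).
have r2 := bin_ratio N hDM.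
have r3 : 'C(N, M) <= 'C(N, m').
  have -> : m' = M + s by clear -eM sm; lia.
  apply: bin_mono; clear -hm' eM sm; lia.
have hpos : 0 < (N - M) ^ s by rewrite expn_gt0; apply/orP; left; clear -hNM M0; lia.
rewrite -(ltn_pmul2r hpos) hC.
have e1 : (N - M) ^ s >= 2 ^ t * M ^ s.
  apply: leq_trans hB _; apply: expn_mono; clear -hNM; lia.
apply: (@leq_ltn_trans (n ^ (k * n) * (D.+1 * ('C(N, D) * (N - M) ^ s)))).
  by rewrite -mulnA; apply: leq_mul => //; rewrite mulnA; apply: leq_mul.
apply: (@leq_ltn_trans (n ^ (k * n) * (D.+1 * ('C(N, m') * M ^ s)))).
  apply: leq_mul => //; apply: leq_mul => //.
  exact: leq_trans r2 (leq_mul r3 (leqnn _)).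
apply: (leq_trans _ (leq_mul (leqnn _) e1)).
rewrite mulnA [X in _ < X]mulnCA.
rewrite ltn_pmul2r //.
by rewrite muln_gt0 hCp expn_gt0 M0.
Qed.

Lemma sq_pow t : t.+1 ^ 2 <= 4 * 2 ^ t.
Proof.
elim: t => // t IH.
case: t IH => [|[|t]] IH //.
rewrite [2 ^ _]expnS; move: IH; set P := 2 ^ _ => IH.
rewrite !expnS !expn0 !muln1 in IH *; nia.
Qed.

Lemma lin_pow c t : 4 * c <= t.+1 -> c * t.+1 <= 2 ^ t.
Proof.
move=> h; rewrite -(leq_pmul2l (isT : 0 < 4)); apply: leq_trans (sq_pow t).
by rewrite mulnA expnS expn1; apply: leq_mul.
Qed.

Lemma log_small C : exists n0, forall n, n0 <= n -> exists u, n < 2 ^ u /\ C * u <= n.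
Proof.
exists (C * (4 * C)).+1 => n hn.
have n0 : 0 < n by lia.
exists (trunc_log 2 n).+1; split; first exact: trunc_log_ltn.
have h1 := trunc_logP (isT : 1 < 2) n0.
case: (leqP (4 * C) (trunc_log 2 n).+1) => h.
  exact: leq_trans (lin_pow h) h1.
apply: leq_trans (ltnW hn); rewrite leq_mul2l; apply/orP; right; lia.
Qed.

Lemma growth k q : 0 < q -> exists n0, forall n, n0 <= n ->
  n ^ (k * n) * n ^ 2 < 2 ^ ('C(n, 2) %/ q %/ q).
Proof.
move=> q0.
have [n1 hn1] := log_small (4 * (q * q) * (k + 2)).
exists (maxn n1 (2 * q + 4)) => n hn.
have [u [hu1 hu2]] := hn1 n ltac:(lia).
have eN : 2 * 'C(n, 2) = n * (n - 1) by rewrite -mul_bin_diag bin1 subn1.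
set N := 'C(n, 2) in eN *.
set s := N %/ q; set t := s %/ q.
have hs : N < q * s.+1 by rewrite mulnC ltn_ceil.
have ht : s < q * t.+1 by rewrite mulnC ltn_ceil.
have n2 : 2 * q + 4 <= n by lia.
rewrite -expnD.
apply: (@leq_trans ((2 ^ u) ^ (k * n + 2))).
  by rewrite ltn_exp2r // addn2.
rewrite -expnM leq_exp2l //.
have hqt : N <= q * q * t + q * q + q by nia.
have key : 4 * (q * q) * (u * (k * n + 2)) <= n * n.
  apply: (@leq_trans (4 * (q * q) * (k + 2) * u * n)).
    have : k * n + 2 <= (k + 2) * n by nia.
    move=> h; have := leq_mul (leqnn (4 * (q * q) * u)) h.
    move=> h2; apply: (leq_trans _ (leq_trans h2 _)).
      by rewrite !mulnA.
    by apply: eq_leq; nia.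
  by rewrite leq_mul2r hu2 orbT.
suff : 4 * (q * q) * (u * (k * n + 2)) <= 4 * (q * q) * t.
  by rewrite leq_pmul2l // !muln_gt0 q0.
apply: (leq_trans key).
nia.
Qed.

End NatB.
Import NatB.

Section Real.
Local Open Scope classical_set_scope.
Local Open Scope ring_scope.
Variable R : realType.

Lemma dist_ge0 n (E F : {set {set 'I_n}}) : 0 <= dist R E F.
Proof. by rewrite /dist divr_ge0 // ler0n. Qed.

Lemma dist_kword_le k n (E F : {set {set 'I_n}}) :
  kword_representable k F -> dist_kword R k E <= dist R E F.
Proof. by move=> h; rewrite /dist_kword; apply: bigmin_le_cond; apply/asboolP. Qed.

Lemma dist_kword_ge k n (E : {set {set 'I_n}}) (b : R) : b <= 1 ->
  (forall F, kword_representable k F -> b <= dist R E F) -> b <= dist_kword R k E.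
Proof. by move=> b1 h; rewrite /dist_kword; apply: le_bigmin => // F /asboolP /h. Qed.

Lemma dist_kword_ge0 k n (E : {set {set 'I_n}}) : 0 <= dist_kword R k E.
Proof. by apply: dist_kword_ge => // F _; apply: dist_ge0. Qed.

Lemma dist_kword_ub k n (E : {set {set 'I_n}}) : (2 <= k)%N -> simple_graph E ->
  dist_kword R k E <= (#|E|%:R / ('C(n, 2))%:R) /\
  dist_kword R k E <= (('C(n, 2))%:R - #|E|%:R) / ('C(n, 2))%:R.
Proof.
move=> hk sE; split.
  by have := dist_kword_le E (empty_rep n hk); rewrite /dist symdiff0.
have := dist_kword_le E (complete_rep k n).
rewrite /dist symdiffK ?simple_sub // natrB //.
by rewrite -card_Pairs; apply: subset_leq_card; apply: simple_sub.
Qed.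

Lemma part3 k (hk : (2 <= k)%N) (eps : R) n : (2 <= n)%N ->
  forall E : {set {set 'I_n}}, simple_graph E ->
    1 / 2 - eps <= dist_kword R k E ->
    1 / 2 - eps <= edge_density R E <= 1 / 2 + eps.
Proof.
move=> n2 E sE h.
have [h1 h2] := dist_kword_ub hk sE.
have N0 : 0 < ('C(n, 2))%:R :> R by rewrite ltr0n bin_gt0.
have e : (('C(n, 2))%:R - #|E|%:R) / ('C(n, 2))%:R = 1 - edge_density R E :> R.
  by rewrite /edge_density mulrBl divff // gt_eqF.
rewrite e in h2; rewrite /edge_density in h2 *.
apply/andP; split; lra.
Qed.


Definition mm (p : R) n := `|Num.floor (p * ('C(n, 2))%:R)|%N.

Lemma mm_facts (p : R) n : 0 <= p -> p <= 1 ->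
  [/\ (mm p n)%:R <= p * ('C(n, 2))%:R, p * ('C(n, 2))%:R < (mm p n)%:R + 1,
      (mm p n <= 'C(n, 2))%N & (mm p n)%:Z = Num.floor (p * ('C(n, 2))%:R)].
Proof.
move=> p0 p1.
have f0 : (0 <= Num.floor (p * ('C(n, 2))%:R))%R by rewrite floor_ge0 mulr_ge0.
have e : (mm p n)%:R = (Num.floor (p * ('C(n, 2))%:R))%:~R :> R.
  by rewrite /mm natr_absz ger0_norm.
have h1 : (mm p n)%:R <= p * ('C(n, 2))%:R by rewrite e floor_le_tmp.
split => //.
- by rewrite e -[1]/(1%:~R) -intrD floorD1_gt.
- rewrite -(ler_nat R); apply: le_trans h1 _.
  by rewrite ler_piMl.
- by rewrite /mm abszE ger0_norm.
Qed.

Lemma upper_bound k (hk : (2 <= k)%N) (p : R) n : 0 <= p -> p <= 1 -> (2 <= n)%N ->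
  max_dist_density k p n <= Num.min p (1 - p) + 1 / ('C(n, 2))%:R.
Proof.
move=> p0 p1 n2.
have N0 : 0 < ('C(n, 2))%:R :> R by rewrite ltr0n bin_gt0.
have [f1 f2 f3 f4] := mm_facts n p0 p1.
rewrite /max_dist_density; apply: bigmax_le.
  by rewrite addr_ge0 // ?divr_ge0 // ?le_min ?p0 ?subr_ge0 ?p1.
move=> E /andP [sE /eqP cE].
have cE' : #|E| = mm p n by apply/eqP; rewrite -eqz_nat f4 cE.
have [h1 h2] := dist_kword_ub hk sE.
rewrite cE' in h1 h2.
set N := ('C(n, 2))%:R in N0 f1 f2 h1 h2 *.
set x := (mm p n)%:R in f1 f2 h1 h2.
have a1 : x / N <= p by rewrite ler_pdivrMr.
have a2 : p < x / N + 1 / N by rewrite -mulrDl ltr_pdivlMr.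
have a3 : (N - x) / N = 1 - x / N by rewrite mulrBl divff // gt_eqF.
rewrite a3 in h2.
rewrite -lerBlDr le_min; apply/andP; split; lra.
Qed.

Lemma upper_bound2 k (hk : (2 <= k)%N) n : (2 <= n)%N ->
  @max_dist R k n <= 1 / 2.
Proof.
move=> n2.
have N0 : 0 < ('C(n, 2))%:R :> R by rewrite ltr0n bin_gt0.
rewrite /max_dist; apply: bigmax_le => // E sE.
have [h1 h2] := dist_kword_ub hk sE.
have a3 : (('C(n, 2))%:R - #|E|%:R) / ('C(n, 2))%:R = 1 - #|E|%:R / ('C(n, 2))%:R :> R.
  by rewrite mulrBl divff // gt_eqF.
rewrite a3 in h2; lra.
Qed.


Lemma lower k (hk : (2 <= k)%N) (p : R) (p0 : 0 <= p) (p1 : p <= 1) (e : R) (e0 : 0 < e) :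
  \forall n \near \oo, exists E : {set {set 'I_n}},
    [/\ simple_graph E, #|E| = mm p n & Num.min p (1 - p) - e <= dist_kword R k E].
Proof.
set mu := Num.min p (1 - p).
have mup : mu <= p by rewrite ge_min lexx.
have mup' : mu <= 1 - p by rewrite ge_min lexx orbT.
case: (leP mu e) => hme.
  exists 0%N => // n _.
  have [_ _ f3 _] := mm_facts n p0 p1.
  have [E [sE cE]] := exists_card f3.
  exists E; split => //.
  apply: le_trans (dist_kword_ge0 _ _); lra.
set q := Num.bound (4 / e).
have hq : 4 / e < q%:R by apply: archi_boundP; rewrite divr_ge0 // ltW.
have q0 : (0 < q)%N.
  by rewrite -(ltr_nat R); apply: lt_trans hq; rewrite divr_gt0.
have eq4 : 4 < e * q%:R by rewrite mulrC -ltr_pdivrMr.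
have [n1 hn1] := growth k q0.
set B := Num.bound (2 / e).
have hB : 2 / e < B%:R by apply: archi_boundP; rewrite divr_ge0 // ltW.
have eB : 2 < e * B%:R by rewrite mulrC -ltr_pdivrMr.
exists (n1 + 2 * q + B + 2)%N => // n /= hn.
have eN : (2 * 'C(n, 2) = n * (n - 1))%N by rewrite -mul_bin_diag bin1 subn1.
have [f1 f2 f3 f4] := mm_facts n p0 p1.
move: f1 f2 f3 f4 eN; set N := 'C(n, 2); set m := mm p n => f1 f2 f3 f4 eN.
have hN : (2 * q + B + 1 <= N)%N by clear -hn eN; nia.
set s := (N %/ q)%N.
have hs1 : (q * s <= N)%N by rewrite mulnC leq_trunc_div.
set m' := minn m (N - m).
set D := (m' - 2 * s)%N.
have Nr0 : 0 < N%:R :> R by rewrite ltr0n; clear -hN; lia.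
have eNB : 2 <= e * N%:R.
  apply: ltW; apply: lt_le_trans eB _; rewrite ler_pM2l // ler_nat; clear -hN; lia.
have hs4 : 4 * s%:R <= e * N%:R.
  have a1 : (q * s)%:R <= N%:R :> R by rewrite ler_nat.
  rewrite natrM in a1.
  have a2 : 0 <= s%:R :> R by [].
  have a3 : 4 * s%:R <= e * q%:R * s%:R by rewrite ler_wpM2r // ltW.
  apply: le_trans a3 _; rewrite -mulrA; apply: ler_wpM2l => //; exact: ltW.
have hm' : mu * N%:R <= m'%:R + 1.
  have em' : m' = minn m (N - m) by [].
  case: (leqP m (N - m)) => h.
    have -> : m' = m by clear -h em'; lia.
    apply: le_trans (ltW f2); rewrite ler_wpM2r // ltW.
  have -> : m' = (N - m)%N by clear -h em'; lia.
  rewrite natrB //.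
  apply: (@le_trans _ _ ((1 - p) * N%:R)); first by rewrite ler_wpM2r // ltW.
  lra.
have sm : (2 * s <= m')%N.
  rewrite -(ler_nat R) natrM.
  have : mu * N%:R >= e * N%:R by rewrite ler_wpM2r // ltW.
  lra.
have hmN : (m' <= N - m)%N by apply: geq_minr.
have hDm : (D <= m')%N by apply: leq_subr.
have hD : (D.+1 <= N)%N by clear -hmN hDm hN sm; lia.
have hgrow := hn1 n ltac:(clear -hn; lia).
have hcore := core (n := n) (k := k) (m := m) (q := q) (N := N) (s := s) (m' := m') (D := D)
  erefl erefl erefl erefl f3 q0 ltac:(clear -hN; lia) sm.
have [E [sE cE hE]] : exists E : {set {set 'I_n}}, [/\ simple_graph E, #|E| = m &
    forall F, kword_representable k F -> (D < symdiff_card E F)%N].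
  apply: count_exists; apply: hcore.
  apply: leq_ltn_trans hgrow; rewrite leq_mul2l; apply/orP; right.
  clear -hD eN; nia.
exists E; split => //.
have b1 : (D.+1)%:R / N%:R <= 1 :> R by rewrite ler_pdivrMr // mul1r ler_nat.
apply: le_trans (dist_kword_ge b1 _).
  rewrite ler_pdivlMr // /D -addn1 natrD natrB // natrM.
  have : mu * N%:R - e * N%:R = (mu - e) * N%:R by rewrite mulrBl.
  lra.
move=> F /hE h; rewrite /dist ler_pM2r ?invr_gt0 // ler_nat //.
Qed.

End Real.

Unset Implicit Arguments.
Local Open Scope classical_set_scope.
Local Open Scope ring_scope.

Theorem mainTheorem2 (R : realType) (k : nat) (hk : (2 <= k)%N) :
  (forall p : R, 0 <= p -> p <= 1 ->
     (fun n : nat => max_dist_density k p n) @ \oo --> (Num.min p (1 - p) : R))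
  /\ ((fun n : nat => @max_dist R k n) @ \oo --> (1 / 2 : R))
  /\ (forall (eps : R), 0 < eps -> forall (n : nat), (2 <= n)%N ->
        forall E : {set {set 'I_n}}, simple_graph E ->
          1 / 2 - eps <= @dist_kword R k n E ->
          1 / 2 - eps <= @edge_density R n E <= 1 / 2 + eps).
Proof.
have evN : forall e : R, 0 < e -> \forall n \near \oo,
    (2 <= n)%N /\ 1 / ('C(n, 2))%:R <= e.
  move=> e e0.
  set B := Num.bound (1 / e).
  have hB : 1 / e < B%:R by apply: archi_boundP; rewrite divr_ge0 // ltW.
  exists (B + 2)%N => // n /= hn; split; first by lia.
  have eN : (2 * 'C(n, 2) = n * (n - 1))%N by rewrite -mul_bin_diag bin1 subn1.
  have hN : (B + 1 <= 'C(n, 2))%N by clear -hn eN; nia.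
  have N0 : 0 < ('C(n, 2))%:R :> R by rewrite ltr0n; clear -hN; lia.
  have h : 1 / e < ('C(n, 2))%:R.
    by apply: lt_le_trans hB _; rewrite ler_nat; clear -hN; lia.
  rewrite ltr_pdivrMr // in h.
  by rewrite ler_pdivrMr // mulrC ltW.
split; [|split].
- move=> p p0 p1; apply/cvgrPdist_le => e e0.
  move: (lower hk p0 p1 e0) (evN e e0); apply: filterS2 => n [E [sE cE hE]] [n2 hN].
  have [_ _ _ f4] := mm_facts n p0 p1.
  have hU := upper_bound hk p0 p1 n2.
  have hL : dist_kword R k E <= max_dist_density k p n.
    rewrite /max_dist_density; apply: (bigmax_sup E) => //.
    by rewrite sE /= cE f4.
  rewrite ler_norml; apply/andP; split; lra.
- apply/cvgrPdist_le => e e0.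
  have h0 : (0 : R) <= 1 / 2 by [].
  have h1 : (1 / 2 : R) <= 1 by rewrite ler_pdivrMr // mul1r ler1n.
  move: (lower hk h0 h1 e0) (evN e e0); apply: filterS2 => n [E [sE cE hE]] [n2 hN].
  have hU := @upper_bound2 R k hk n n2.
  have hL : dist_kword R k E <= max_dist R k n.
    by rewrite /max_dist; apply: (bigmax_sup E).
  have em : 1 / 2 <= Num.min (1 / 2) (1 - 1 / 2) :> R.
    have h2 : (1 / 2 : R) + 1 / 2 = 1 by rewrite -splitr.
    rewrite le_min lexx /=; lra.
  clear evN h0 h1 hN; rewrite ler_norml; apply/andP; split; lra.
- move=> eps e0 n n2 E sE h; exact: (@part3 R k hk eps n n2 E sE h).
Qed.
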